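(* Let $0<\varepsilon\le 0.1$, let $\Box$ be a closed axis-parallel square of side length $\varepsilon$ with center $o$, and let $R\subseteq\Box$ be a nonempty circular domain. Then every ray emanating from $o$ intersects the boundary $\partial(R\oplus D)$ in exactly one point; consequently the map $\pi:\partial(R\oplus D)\to\mathbb{S}^1$, $\pi(p)=\overrightarrow{op}/\lVert\overrightarrow{op}\rVert$, is a homeomorphism.
   Context: A circular arc is a connected portion of a circle in $\mathbb{R}^2$ (segments included). A circular domain is a closed subset of $\mathbb{R}^2$ whose boundary consists of finitely many circular arcs intersecting only at their endpoints (finite point sets are also allowed). $D$ is the closed unit disk centered at the origin and $\oplus$ denotes Minkowski sum. *)

(* Defs.v *)
From HB Require Import structures.
From mathcomp Require Import all_boot all_order all_algebra.
From mathcomp Require Import all_classical all_reals all_analysis.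
Set Implicit Arguments. Unset Strict Implicit. Unset Printing Implicit Defensive.
Import Order.TTheory GRing.Theory Num.Theory numFieldNormedType.Exports.
Local Open Scope classical_set_scope.
Local Open Scope ring_scope.

Section Plane.
Variable R : realType.
Notation pt := (R * R)%type.

Definition padd (p q : pt) : pt := (p.1 + q.1, p.2 + q.2).
Definition psub (p q : pt) : pt := (p.1 - q.1, p.2 - q.2).
Definition pscale (t : R) (p : pt) : pt := (t * p.1, t * p.2).
Definition enorm (p : pt) : R := Num.sqrt (p.1 ^+ 2 + p.2 ^+ 2).

Definition unit_disk : set pt := [set p | enorm p <= 1].
Definition unit_circle : set pt := [set p | enorm p = 1].

Definition minkowski_sum (A B : set pt) : set pt :=
  [set p | exists a b, A a /\ B b /\ p = padd a b].

Definition boundary (A : set pt) : set pt := closure A `\` interior A.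

Definition square (o : pt) (eps : R) : set pt :=
  [set p | `|p.1 - o.1| <= eps / 2 /\ `|p.2 - o.2| <= eps / 2].

(* A segment [a,b] (a = b allowed, giving a
   single point, so that finite point sets are covered), or an arc of the circle
   of center c and radius r > 0 swept by angles t0 <= t <= t1 with
   t1 - t0 <= 2 pi. *)
Inductive arc :=
  | Seg of pt & pt
  | Circ of pt & R & R & R.

Definition arc_wf (A : arc) : Prop :=
  match A with
  | Seg _ _ => True
  | Circ _ r t0 t1 => 0 < r /\ t0 <= t1 /\ t1 - t0 <= 2 * pi
  end.

Definition arc_set (A : arc) : set pt :=
  match A with
  | Seg a b => [set p | exists2 t, 0 <= t <= 1 &
                         p = padd a (pscale t (psub b a))]
  | Circ c r t0 t1 => [set p | exists2 t, t0 <= t <= t1 &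
                         p = padd c (pscale r (cos t, sin t))]
  end.

Definition arc_endpoints (A : arc) : set pt :=
  match A with
  | Seg a b => [set a; b]
  | Circ c r t0 t1 => [set padd c (pscale r (cos t0, sin t0));
                          padd c (pscale r (cos t1, sin t1))]
  end.

Definition circular_domain (S : set pt) : Prop :=
  closed S /\
  exists (n : nat) (a : 'I_n -> arc),
    (forall i, arc_wf (a i)) /\
    boundary S = \bigcup_(i in [set: 'I_n]) arc_set (a i) /\
    (forall i j, i <> j ->
       arc_set (a i) `&` arc_set (a j) `<=` arc_endpoints (a i) `&` arc_endpoints (a j)).

Definition ray (o u : pt) : set pt := [set p | exists2 t, 0 <= t & p = padd o (pscale t u)].

Definition radial (o p : pt) : pt := pscale (enorm (psub p o))^-1 (psub p o).

End Plane.

(* Main.v *)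
Require Import Defs.
From HB Require Import structures.
From mathcomp Require Import all_boot all_order all_algebra.
From mathcomp Require Import all_classical all_reals all_analysis.
From mathcomp Require Import ring lra.
Import Order.TTheory GRing.Theory Num.Theory numFieldNormedType.Exports.
Local Open Scope classical_set_scope.
Local Open Scope ring_scope.

Section Inf.
Context {R : realType}.

Lemma ballRE (a b e : R) : ball a e b <-> `|a - b| < e.
Proof. by rewrite -ball_normE. Qed.

Lemma ball2E (x y : R * R) e : ball x e y <-> (`|x.1 - y.1| < e /\ `|x.2 - y.2| < e).
Proof. by rewrite /ball /= /prod_ball -!ball_normE. Qed.

Lemma ed_cont (U V : pseudoMetricType R) (f : U -> V) x :
  (forall e : R, 0 < e -> exists2 d : R, 0 < d & forall y, ball x d y -> ball (f x) e (f y)) ->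
  {for x, continuous f}.
Proof.
move=> H; apply/cvg_ballP => e e0; have [d d0 Hd] := H e e0.
by apply/nbhs_ballP; exists d => // y xy; exact: Hd.
Qed.

Lemma cont_ed (U V : pseudoMetricType R) (f : U -> V) x :
  {for x, continuous f} ->
  (forall e : R, 0 < e -> exists2 d : R, 0 < d & forall y, ball x d y -> ball (f x) e (f y)).
Proof.
move=> /cvg_ballP H e e0; have := H e e0 => /nbhs_ballP [d d0 Hd].
by exists d => // y /Hd.
Qed.

Lemma ed_within (U V : pseudoMetricType R) (A : set U) (f : U -> V) :
  (forall x, A x -> forall e : R, 0 < e -> exists2 d : R, 0 < d &
     forall y, A y -> ball x d y -> ball (f x) e (f y)) ->
  {within A, continuous f}.
Proof.
move=> H; apply/subspace_continuousP => x Ax.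
apply/cvg_ballP => e e0; have [d d0 Hd] := H x Ax e e0.
by apply/nbhs_ballP; exists d => // y xy Ay; exact: Hd.
Qed.

Lemma interiorP (A : set (R * R)) x :
  interior A x <-> exists2 e : R, 0 < e & forall y, ball x e y -> A y.
Proof.
rewrite /interior /=; split.
  by move=> /nbhs_ballP [e e0 H]; exists e.
by move=> [e e0 H]; apply/nbhs_ballP; exists e.
Qed.

Lemma closureP (A : set (R * R)) x :
  closure A x <-> forall e : R, 0 < e -> exists y, A y /\ ball x e y.
Proof.
split.
  move=> H e e0; have [y [Ay By]] := H (ball x e) (nbhsx_ballx x e e0).
  by exists y.
move=> H B /nbhs_ballP [e e0 Hb]; have [y [Ay By]] := H e e0.
by exists y; split => //; exact: Hb.
Qed.

Lemma fst_cont (x : R * R) : {for x, continuous (fun p : R * R => p.1)}.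
Proof.
apply: ed_cont => e e0; exists e => // y /ball2E [h1 _]; exact/ballRE.
Qed.

Lemma snd_cont (x : R * R) : {for x, continuous (fun p : R * R => p.2)}.
Proof.
apply: ed_cont => e e0; exists e => // y /ball2E [_ h2]; exact/ballRE.
Qed.


Lemma cont_pair (f g : R * R -> R) (x : R * R) : {for x, continuous f} -> {for x, continuous g} ->
  {for x, continuous (fun q => (f q, g q))}.
Proof.
move=> cf cg; apply: ed_cont => e e0.
have [d1 d10 H1] := @cont_ed _ _ _ _ cf _ e0; have [d2 d20 H2] := @cont_ed _ _ _ _ cg _ e0.
exists (Num.min d1 d2); first by rewrite lt_min d10 d20.
move=> y hy; split.
  by apply: H1; apply: le_ball hy; rewrite ge_min lexx.
by apply: H2; apply: le_ball hy; rewrite ge_min lexx orbT.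
Qed.

Lemma sqd_cont (x : R * R) (f : R * R -> R) (c : R) : {for x, continuous f} ->
  {for x, continuous (fun q => (f q - c)^+2)}.
Proof.
move=> cf; apply: (continuous_comp (f := fun s => f s - c) (g := fun z : R => z ^+ 2)).
  by apply: continuousB => //; exact: cvg_cst.
exact: exprn_continuous.
Qed.

End Inf.

Set Implicit Arguments. Unset Strict Implicit.

Section Ar.
Context {R : realType}.

Lemma absB (x c : R) : `|x| <= c -> - c <= x /\ x <= c.
Proof. by rewrite ler_norml => /andP. Qed.
Lemma absBlt (x c : R) : `|x| < c -> - c < x /\ x < c.
Proof. by rewrite ltr_norml => /andP. Qed.

Lemma ar_near_lt (a1 a2 d1 d2 d : R) : a1^+2 + a2^+2 < 1 ->
  d = (1 - (a1^+2 + a2^+2)) / 7 -> `|d1| < d -> `|d2| < d ->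
  (a1 + d1)^+2 + (a2 + d2)^+2 < 1.
Proof.
move=> h hd /absBlt [h1 h2] /absBlt [h3 h4].
have ha1 : a1^+2 <= 1 by nra.
have ha2 : a2^+2 <= 1 by nra.
have b1 : -1 <= a1 <= 1 by apply/andP; split; nra.
have b2 : -1 <= a2 <= 1 by apply/andP; split; nra.
case/andP: b1 => b1 b1'; case/andP: b2 => b2 b2'.
have e1 : a1 * d1 <= d by nra.
have e2 : a2 * d2 <= d by nra.
have e3 : d1 ^+2 <= d * d by nra.
have e4 : d2 ^+2 <= d * d by nra.
have dle : d <= 1/7 by rewrite hd; nra.
nra.
Qed.

Lemma ar_near_le (b1 b2 d1 d2 d : R) : b1^+2 + b2^+2 <= 1 -> d <= 1 ->
  `|d1| < d -> `|d2| < d ->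
  (b1 + d1)^+2 + (b2 + d2)^+2 <= 1 + 6 * d.
Proof.
move=> h hd /absBlt [h1 h2] /absBlt [h3 h4].
have x1 : -1 <= b1 <= 1 by apply/andP; split; nra.
have x2 : -1 <= b2 <= 1 by apply/andP; split; nra.
case/andP: x1 => x1 x1'; case/andP: x2 => x2 x2'.
have e1 : b1 * d1 <= d by nra.
have e2 : b2 * d2 <= d by nra.
have e3 : d1 ^+2 <= d by nra.
have e4 : d2 ^+2 <= d by nra.
nra.
Qed.

Lemma ar_mono (t t' u1 u2 w1 w2 : R) : 0 <= t -> t < t' ->
  `|w1| <= 1/20 -> `|w2| <= 1/20 ->
  1 <= (t*u1 - w1)^+2 + (t*u2 - w2)^+2 ->
  (t*u1 - w1)^+2 + (t*u2 - w2)^+2 < (t'*u1 - w1)^+2 + (t'*u2 - w2)^+2.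
Proof.
move=> t0 tt' /absB [h1 h2] /absB [h3 h4] H.
set a := u1^+2 + u2^+2; set c := u1 * w1 + u2 * w2.
have a0 : 0 <= a by rewrite /a; nra.
have ww : w1^+2 + w2^+2 <= 1/200 by nra.
have E : forall x : R, (x*u1 - w1)^+2 + (x*u2 - w2)^+2 = x^+2 * a - 2 * x * c + (w1^+2 + w2^+2).
  by move=> x; rewrite /a /c; ring.
have key : c < t * a.
  rewrite ltNge; apply/negP => hc.
  have : t^+2 * a <= t * c by nra.
  move: H; rewrite E => H1 H2.
  have : t * c >= 0 by nra.
  nra.
rewrite !E.
have : t' * a >= t * a by nra.
nra.
Qed.


Definition Fq (t v1 v2 w1 w2 : R) := (t*v1 - w1)^+2 + (t*v2 - w2)^+2.

Lemma FqE t v1 v2 w1 w2 : v1^+2 + v2^+2 = 1 ->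
  Fq t v1 v2 w1 w2 = t^+2 - 2 * t * (v1 * w1 + v2 * w2) + (w1^+2 + w2^+2).
Proof.
move=> hv; rewrite /Fq.
have -> : (t*v1 - w1)^+2 + (t*v2 - w2)^+2 = t^+2 * (v1^+2 + v2^+2) - 2 * t * (v1 * w1 + v2 * w2) + (w1^+2 + w2^+2) by ring.
by rewrite hv mulr1.
Qed.

Lemma ar_unit (v1 v2 : R) : v1^+2 + v2^+2 = 1 -> -1 <= v1 <= 1 /\ -1 <= v2 <= 1.
Proof. move=> h; split; apply/andP; split; nra. Qed.

Lemma ar_dot (v1 v2 w1 w2 : R) : v1^+2 + v2^+2 = 1 -> `|w1| <= 1/20 -> `|w2| <= 1/20 ->
  -1/10 <= v1 * w1 + v2 * w2 <= 1/10 /\ w1^+2 + w2^+2 <= 1/200.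
Proof.
move=> hv /absB [h1 h2] /absB [h3 h4].
have [/andP [a1 a2] /andP [a3 a4]] := ar_unit hv.
have e1 : v1 * w1 <= 1/20 by nra.
have e2 : v2 * w2 <= 1/20 by nra.
have e3 : - (1/20) <= v1 * w1 by nra.
have e4 : - (1/20) <= v2 * w2 by nra.
split; first by apply/andP; split; lra.
nra.
Qed.

Lemma ar_tlow t v1 v2 w1 w2 : v1^+2 + v2^+2 = 1 -> `|w1| <= 1/20 -> `|w2| <= 1/20 ->
  0 <= t -> 1 <= Fq t v1 v2 w1 w2 -> 4/5 <= t.
Proof.
move=> hv h1 h2 t0; rewrite FqE //.
have [/andP [d1 d2] d3] := ar_dot hv h1 h2.
move=> H; rewrite leNgt; apply/negP => ht.
have : t * (v1 * w1 + v2 * w2) >= - t / 10 by nra.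
nra.
Qed.

Lemma ar_thigh t v1 v2 w1 w2 : v1^+2 + v2^+2 = 1 -> `|w1| <= 1/20 -> `|w2| <= 1/20 ->
  0 <= t -> Fq t v1 v2 w1 w2 <= 1 -> t <= 6/5.
Proof.
move=> hv h1 h2 t0; rewrite FqE //.
have [/andP [d1 d2] d3] := ar_dot hv h1 h2.
move=> H; rewrite leNgt; apply/negP => ht.
have : t * (v1 * w1 + v2 * w2) <= t / 10 by nra.
have : 0 <= w1^+2 + w2^+2 by nra.
nra.
Qed.

Lemma ar_mono2 t1 t2 v1 v2 w1 w2 : v1^+2 + v2^+2 = 1 -> `|w1| <= 1/20 -> `|w2| <= 1/20 ->
  7/10 <= t1 -> t1 <= t2 -> Fq t1 v1 v2 w1 w2 <= Fq t2 v1 v2 w1 w2.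
Proof.
move=> hv h1 h2 ht1 ht12; rewrite !FqE //.
have [/andP [d1 d2] d3] := ar_dot hv h1 h2.
set c := v1 * w1 + v2 * w2 in d1 d2 *.
have -> : t2^+2 - 2 * t2 * c = t1^+2 - 2 * t1 * c + (t2 - t1) * (t1 + t2 - 2 * c) by ring.
have : 0 <= (t2 - t1) * (t1 + t2 - 2 * c) by apply: mulr_ge0; lra.
lra.
Qed.

Lemma ar_up t0 v1 v2 w1 w2 eta : v1^+2 + v2^+2 = 1 -> `|w1| <= 1/20 -> `|w2| <= 1/20 ->
  4/5 <= t0 -> 0 < eta -> 1 <= Fq t0 v1 v2 w1 w2 -> 1 + 7/5 * eta <= Fq (t0 + eta) v1 v2 w1 w2.
Proof.
move=> hv h1 h2 ht e0; rewrite !FqE //.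
have [/andP [d1 d2] d3] := ar_dot hv h1 h2.
set c := v1 * w1 + v2 * w2 in d1 d2 *.
have -> : (t0 + eta)^+2 - 2 * (t0 + eta) * c = t0^+2 - 2 * t0 * c + eta * (2 * t0 + eta - 2 * c) by ring.
have : 7/5 * eta <= eta * (2 * t0 + eta - 2 * c) by nra.
lra.
Qed.

Lemma ar_down t0 v1 v2 w1 w2 eta : v1^+2 + v2^+2 = 1 -> `|w1| <= 1/20 -> `|w2| <= 1/20 ->
  4/5 <= t0 -> 0 < eta -> eta <= 1/10 -> Fq t0 v1 v2 w1 w2 <= 1 ->
  Fq (t0 - eta) v1 v2 w1 w2 <= 1 - 6/5 * eta.
Proof.
move=> hv h1 h2 ht e0 e1; rewrite !FqE //.
have [/andP [d1 d2] d3] := ar_dot hv h1 h2.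
set c := v1 * w1 + v2 * w2 in d1 d2 *.
have -> : (t0 - eta)^+2 - 2 * (t0 - eta) * c = t0^+2 - 2 * t0 * c - eta * (2 * t0 - eta - 2 * c) by ring.
have : 6/5 * eta <= eta * (2 * t0 - eta - 2 * c) by nra.
lra.
Qed.

Lemma ar_perturb T v1 v2 u1 u2 w1 w2 d : v1^+2 + v2^+2 = 1 -> u1^+2 + u2^+2 = 1 ->
  `|w1| <= 1/20 -> `|w2| <= 1/20 -> 0 <= T -> T <= 13/10 ->
  `|u1 - v1| < d -> `|u2 - v2| < d ->
  Fq T v1 v2 w1 w2 - 8 * d <= Fq T u1 u2 w1 w2 /\ Fq T u1 u2 w1 w2 <= Fq T v1 v2 w1 w2 + 8 * d.
Proof.
move=> hv hu /absB [h1 h2] /absB [h3 h4] T0 T1 /absBlt [k1 k2] /absBlt [k3 k4].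
have [/andP [a1 a2] /andP [a3 a4]] := ar_unit hv.
have [/andP [b1 b2] /andP [b3 b4]] := ar_unit hu.
rewrite /Fq.
have E1 : (T*u1 - w1)^+2 - (T*v1 - w1)^+2 = (T * (u1 - v1)) * (T * (u1 + v1) - 2 * w1) by ring.
have E2 : (T*u2 - w2)^+2 - (T*v2 - w2)^+2 = (T * (u2 - v2)) * (T * (u2 + v2) - 2 * w2) by ring.
set x1 := T * (u1 - v1) in E1 *; set x2 := T * (u2 - v2) in E2 *.
set y1 := T * (u1 + v1) - 2 * w1 in E1 *; set y2 := T * (u2 + v2) - 2 * w2 in E2 *.
have dx1 : - (13/10 * d) <= x1 <= 13/10 * d by apply/andP; split; rewrite /x1; nra.
have dx2 : - (13/10 * d) <= x2 <= 13/10 * d by apply/andP; split; rewrite /x2; nra.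
have dy1 : - (27/10) <= y1 <= 27/10 by apply/andP; split; rewrite /y1; nra.
have dy2 : - (27/10) <= y2 <= 27/10 by apply/andP; split; rewrite /y2; nra.
case/andP: dx1 => p1 p2; case/andP: dx2 => p3 p4; case/andP: dy1 => q1 q2; case/andP: dy2 => q3 q4.
have d0 : 0 < d by lra.
have g1 : 0 <= (13/10*d - x1) * (27/10 + y1) by apply: mulr_ge0; lra.
have g2 : 0 <= (13/10*d + x1) * (27/10 - y1) by apply: mulr_ge0; lra.
have g3 : 0 <= (13/10*d - x1) * (27/10 - y1) by apply: mulr_ge0; lra.
have g4 : 0 <= (13/10*d + x1) * (27/10 + y1) by apply: mulr_ge0; lra.
have g5 : 0 <= (13/10*d - x2) * (27/10 + y2) by apply: mulr_ge0; lra.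
have g6 : 0 <= (13/10*d + x2) * (27/10 - y2) by apply: mulr_ge0; lra.
have g7 : 0 <= (13/10*d - x2) * (27/10 - y2) by apply: mulr_ge0; lra.
have g8 : 0 <= (13/10*d + x2) * (27/10 + y2) by apply: mulr_ge0; lra.
have f1 : x1 * y1 <= 4 * d.
  have : (13/10*d - x1) * (27/10 + y1) + (13/10*d + x1) * (27/10 - y1) = 2 * (13/10 * 27/10) * d - 2 * (x1 * y1) by ring.
  lra.
have f3 : - (4 * d) <= x1 * y1.
  have : (13/10*d - x1) * (27/10 - y1) + (13/10*d + x1) * (27/10 + y1) = 2 * (13/10 * 27/10) * d + 2 * (x1 * y1) by ring.
  lra.
have f2 : x2 * y2 <= 4 * d.
  have : (13/10*d - x2) * (27/10 + y2) + (13/10*d + x2) * (27/10 - y2) = 2 * (13/10 * 27/10) * d - 2 * (x2 * y2) by ring.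
  lra.
have f4 : - (4 * d) <= x2 * y2.
  have : (13/10*d - x2) * (27/10 - y2) + (13/10*d + x2) * (27/10 + y2) = 2 * (13/10 * 27/10) * d + 2 * (x2 * y2) by ring.
  lra.
split; lra.
Qed.


Lemma ar_final (x t0 t a b eta d e : R) : `|t0 - t| < eta -> `|a - b| < d ->
  -1 <= b <= 1 -> 0 <= t0 <= 6/5 -> eta <= e/4 -> d = eta/20 ->
  `|x + t0 * a - (x + t * b)| < e.
Proof.
move=> /absBlt [h1 h2] /absBlt [h3 h4] /andP [b1 b2] /andP [t1 t2] he hd.
have -> : x + t0 * a - (x + t * b) = (t0 - t) * b + t0 * (a - b) by ring.
have e1 : - eta <= (t0 - t) * b <= eta by apply/andP; split; nra.
have e2 : - (6/5 * d) <= t0 * (a - b) <= 6/5 * d by apply/andP; split; nra.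
case/andP: e1 => e1 e1'; case/andP: e2 => e2 e2'.
rewrite ltr_norml; apply/andP; split; lra.
Qed.

End Ar.

Section Main.
Variables (R : realType) (o : R * R) (S : set (R * R)).
Hypothesis Hsq : forall s, S s -> `|s.1 - o.1| <= 1/20 /\ `|s.2 - o.2| <= 1/20.
Hypothesis HS0 : S !=set0.
Hypothesis Hcpt : compact S.

Definition N (p s : R * R) := (p.1 - s.1)^+2 + (p.2 - s.2)^+2.
Let M := minkowski_sum S (@unit_disk R).

Lemma sqrt_le1 (x : R) : (Num.sqrt x <= 1) = (x <= 1).
Proof. by rewrite -{1}sqrtr1 ler_sqrt. Qed.

Lemma Mchar p : M p <-> exists s, S s /\ N p s <= 1.
Proof.
split.
- move=> [a [b [Sa [Db ->]]]]; exists a; split => //.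
  move: Db; rewrite /unit_disk /enorm /= sqrt_le1 /N /padd /=.
  by rewrite !(addrC a.1) !(addrC a.2) !addrK.
- move=> [s [Ss Hs]]; exists s, (psub p s); split => //; split.
    by rewrite /unit_disk /enorm /= sqrt_le1.
  by case: p {Hs} => p1 p2; rewrite /padd /psub /=; congr pair; ring.
Qed.

Lemma int_of_lt p s : S s -> N p s < 1 -> interior M p.
Proof.
move=> Ss h; apply/interiorP; exists ((1 - N p s)/7); first by lra.
move=> y /ball2E [h1 h2]; apply/Mchar; exists s; split => //; apply/ltW.
rewrite distrC in h1; rewrite distrC in h2.
have := @ar_near_lt _ (p.1 - s.1) (p.2 - s.2) (y.1 - p.1) (y.2 - p.2) _ h erefl h1 h2.
have -> : p.1 - s.1 + (y.1 - p.1) = y.1 - s.1 by ring.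
by have -> : p.2 - s.2 + (y.2 - p.2) = y.2 - s.2 by ring.
Qed.

Lemma Ncont p : {within S, continuous (N p)}.
Proof.
apply: continuous_in_subspaceT => x _.
have hf : forall (q : R) (f : R * R -> R), {for x, continuous f} ->
    {for x, continuous (fun s : R * R => (q - f s)^+2)}.
  move=> q f cf; apply: (continuous_comp (f := fun s => q - f s) (g := fun z : R => z ^+ 2)).
    by apply: continuousB => //; exact: cvg_cst.
  exact: exprn_continuous.
have H := continuousD (hf p.1 _ (fst_cont x)) (hf p.2 _ (snd_cont x)).
move=> A; rewrite /N; move: A; exact: H.
Qed.

Lemma closure_M p : closure M p -> exists s, S s /\ N p s <= 1.
Proof.
move=> Hc.
have [c cS cmin] := compact_EVT_min HS0 Hcpt (@Ncont p).
rewrite in_setE in cS.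
have [hle|hlt] := leP (N p c) 1; first by exists c.
pose d := Num.min 1 ((N p c - 1)/7).
have d0 : 0 < d by rewrite lt_min; apply/andP; split; lra.
have [y [My By]] := (iffLR (closureP _ _) Hc) d d0.
have [s [Ss Ns]] := (iffLR (Mchar y) My).
move/ball2E: By => [b1 b2].
have dm1 : d <= 1 by rewrite /d ge_min lexx.
have := @ar_near_le _ (y.1 - s.1) (y.2 - s.2) (p.1 - y.1) (p.2 - y.2) d Ns dm1 b1 b2.
have -> : y.1 - s.1 + (p.1 - y.1) = p.1 - s.1 by ring.
have -> : y.2 - s.2 + (p.2 - y.2) = p.2 - s.2 by ring.
have := cmin s; rewrite in_setE => /(_ Ss).
rewrite /N.
have : d <= (N p c - 1)/7 by rewrite /d ge_min lexx orbT.
rewrite /N; lra.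
Qed.

Lemma Nray (u : R * R) t s :
  N (padd o (pscale t u)) s = (t * u.1 - (s.1 - o.1))^+2 + (t * u.2 - (s.2 - o.2))^+2.
Proof. by rewrite /N /padd /pscale /=; congr (_ ^+ 2 + _ ^+ 2); ring. Qed.

Lemma mono_ray u t t' s : S s -> 0 <= t -> t < t' ->
  1 <= N (padd o (pscale t u)) s -> N (padd o (pscale t u)) s < N (padd o (pscale t' u)) s.
Proof.
move=> Ss t0 tt'; have [h1 h2] := Hsq Ss; rewrite !Nray; exact: ar_mono.
Qed.

Lemma notint p : (forall s, S s -> 1 <= N p s) -> ~ interior M p.
Proof.
move=> H /interiorP [e e0 He].
pose v := psub p o.
pose k := `|v.1| + `|v.2| + 1.
have k0 : 0 < k by rewrite /k; have := normr_ge0 v.1; have := normr_ge0 v.2; lra.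
pose dl := e / (2 * k).
have dl0 : 0 < dl by rewrite /dl divr_gt0 // mulr_gt0.
have pE : p = padd o (pscale 1 v) by rewrite [LHS]surjective_pairing /v /padd /pscale /psub /=; congr pair; ring.
have : M (padd o (pscale (1 + dl) v)).
  apply: He; apply/ball2E; rewrite pE /padd /pscale /=.
  have bnd : forall z : R, `|z| <= k -> `|o.1 + 1 * z - (o.1 + (1 + dl) * z)| < e.
    move=> z hz; have -> : o.1 + 1 * z - (o.1 + (1 + dl) * z) = - (dl * z) by ring.
    rewrite normrN normrM (gtr0_norm dl0).
    have : dl * k = e / 2 by rewrite /dl; field; rewrite gt_eqF.
    have : dl * `|z| <= dl * k by rewrite ler_pM2l.
    lra.
  have bnd2 : forall z : R, `|z| <= k -> `|o.2 + 1 * z - (o.2 + (1 + dl) * z)| < e.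
    move=> z hz; have -> : o.2 + 1 * z - (o.2 + (1 + dl) * z) = - (dl * z) by ring.
    rewrite normrN normrM (gtr0_norm dl0).
    have : dl * k = e / 2 by rewrite /dl; field; rewrite gt_eqF.
    have : dl * `|z| <= dl * k by rewrite ler_pM2l.
    lra.
  split; [apply: bnd | apply: bnd2]; rewrite /k; have := normr_ge0 v.1; have := normr_ge0 v.2; lra.
move/Mchar => [s [Ss Hs]].
have := H s Ss; rewrite pE => H1.
have := @mono_ray v 1 (1 + dl) s Ss ler01 (_ : 1 < 1 + dl) H1.
lra.
Qed.

Lemma Bchar p : boundary M p <-> (forall s, S s -> 1 <= N p s) /\ (exists s, S s /\ N p s <= 1).
Proof.
split.
- move=> [Hc Hi]; split; last exact: closure_M.
  move=> s Ss; rewrite leNgt; apply/negP => h; exact: Hi (@int_of_lt p s Ss h).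
- move=> [H1 H2]; split; [apply: subset_closure; exact/Mchar | exact: notint].
Qed.


Definition rp (u : R * R) (t : R) := padd o (pscale t u).
Definition Kn (u : R * R) := `|u.1| + `|u.2| + 1.

Lemma Kn_gt0 u : 0 < Kn u.
Proof. rewrite /Kn; have := normr_ge0 u.1; have := normr_ge0 u.2; lra. Qed.

Lemma ray_ball u t t' e : 0 < e -> `|t - t'| < e / Kn u -> ball (rp u t) e (rp u t').
Proof.
move=> e0 h; have K0 := Kn_gt0 u.
have hk : e / Kn u * Kn u = e by field; rewrite gt_eqF.
have bnd : forall z : R, `|z| <= Kn u - 1 -> `|(t - t') * z| < e.
  move=> z hz; rewrite normrM.
  have : `|t - t'| * `|z| <= `|t - t'| * (Kn u - 1) by rewrite ler_wpM2l.
  have : `|t - t'| * Kn u < e / Kn u * Kn u by rewrite ltr_pM2r.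
  have := normr_ge0 (t - t'); nra.
apply/ball2E; rewrite /rp /padd /pscale /=; split.
  have -> : o.1 + t * u.1 - (o.1 + t' * u.1) = (t - t') * u.1 by ring.
  by apply: bnd; rewrite /Kn; have := normr_ge0 u.2; lra.
have -> : o.2 + t * u.2 - (o.2 + t' * u.2) = (t - t') * u.2 by ring.
by apply: bnd; rewrite /Kn; have := normr_ge0 u.1; lra.
Qed.

Lemma ray_lt u t t' : 0 <= t -> t < t' -> boundary M (rp u t) -> boundary M (rp u t') -> False.
Proof.
move=> t0 tt' /Bchar [H1 _] /Bchar [_ [s [Ss Hs]]].
rewrite /rp in H1 Hs; have := @mono_ray u t t' s Ss t0 tt' (H1 s Ss); have h1 := H1 s Ss; lra.
Qed.

Lemma ray_uniq u t t' : 0 <= t -> 0 <= t' -> boundary M (rp u t) -> boundary M (rp u t') ->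
  rp u t = rp u t'.
Proof.
move=> t0 t'0 h h'; case: (ltgtP t t') => [lt|lt|->] //.
  by case: (@ray_lt u t t' t0 lt h h').
by case: (@ray_lt u t' t t'0 lt h' h).
Qed.

Lemma M_o : M o.
Proof.
have [s0 Ss0] := HS0; apply/Mchar; exists s0; split => //.
have [/absB [h1 h2] /absB [h3 h4]] := Hsq Ss0; rewrite /N.
have e1 : (o.1 - s0.1)^+2 <= 1/400.
  have -> : (o.1 - s0.1)^+2 = (s0.1 - o.1) * (s0.1 - o.1) by ring.
  nra.
have e2 : (o.2 - s0.2)^+2 <= 1/400.
  have -> : (o.2 - s0.2)^+2 = (s0.2 - o.2) * (s0.2 - o.2) by ring.
  nra.
lra.
Qed.

Lemma ray_exists u : u <> (0, 0) -> exists2 t, 0 <= t & boundary M (rp u t).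
Proof.
move=> Hu.
have a0 : 0 < u.1^+2 + u.2^+2.
  case: (eqVneq u.1 0) => h1; case: (eqVneq u.2 0) => h2.
  - by case: Hu; rewrite [u]surjective_pairing h1 h2.
  - have : 0 < u.2^+2 by rewrite lt_def sqrf_eq0 h2 sqr_ge0.
    by have := sqr_ge0 u.1; lra.
  - have : 0 < u.1^+2 by rewrite lt_def sqrf_eq0 h1 sqr_ge0.
    by have := sqr_ge0 u.2; lra.
  - have : 0 < u.1^+2 by rewrite lt_def sqrf_eq0 h1 sqr_ge0.
    by have := sqr_ge0 u.2; lra.
pose a := u.1^+2 + u.2^+2.
have a0' : 0 < a := a0.
pose T := [set t : R | 0 <= t /\ M (rp u t)].
have T0 : T 0.
  split => //; have -> : rp u 0 = o by rewrite /rp /padd /pscale /= !mul0r !addr0; case: o.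
  exact: M_o.
have ub : forall t, T t -> t <= (3 + a) / a.
  move=> t [t0 /Mchar [s [Ss Hs]]].
  have [/absB [h1 h2] /absB [h3 h4]] := Hsq Ss.
  rewrite /rp Nray in Hs.
  rewrite ler_pdivlMr //.
  move: Hs h1 h2 h3 h4; set w1 := s.1 - o.1; set w2 := s.2 - o.2 => Hs h1 h2 h3 h4.
  have e1 : (t*u.1)^+2 <= 2*(t*u.1 - w1)^+2 + 2*w1^+2 by have := sqr_ge0 (t*u.1 - 2*w1); nra.
  have e2 : (t*u.2)^+2 <= 2*(t*u.2 - w2)^+2 + 2*w2^+2 by have := sqr_ge0 (t*u.2 - 2*w2); nra.
  have f1 : w1^+2 <= 1/400 by nra.
  have f2 : w2^+2 <= 1/400 by nra.
  have E : t^+2 * a <= 3.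
    have -> : t^+2 * a = (t*u.1)^+2 + (t*u.2)^+2 by rewrite /a; ring.
    lra.
  case: (leP t 1) => ht.
    by nra.
  have h0 : 0 <= t * ((t - 1) * a) by apply: mulr_ge0; [lra | apply: mulr_ge0; lra].
  have : t * a <= t^+2 * a.
    have -> : t^+2 * a = t * a + t * ((t-1) * a) by ring.
    lra.
  lra.
have hs : has_sup T by split; [exists 0 | exists ((3 + a) / a) => t /ub].
pose ts := sup T.
have ts0 : 0 <= ts by exact: sup_upper_bound hs 0 T0.
have tsub : forall t, T t -> t <= ts by move=> t Tt; exact: sup_upper_bound hs t Tt.
exists ts => //.
apply/Bchar; split; last first.
  apply: closure_M; apply/closureP => e e0.
  have k0 : 0 < e / Kn u by rewrite divr_gt0 // Kn_gt0.
  have [t Tt Ht] := sup_adherent k0 hs.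
  exists (rp u t); split; first by case: Tt.
  apply: ray_ball => //; have := tsub t Tt => tle; rewrite ger0_norm ?subr_ge0 //; rewrite -/ts in Ht; lra.
move=> s Ss; rewrite leNgt; apply/negP => h.
have /interiorP [e e0 He] := @int_of_lt (rp u ts) s Ss h.
have k0 : 0 < e / Kn u by rewrite divr_gt0 // Kn_gt0.
have : T (ts + e / Kn u / 2).
  split; first lra.
  apply: He; apply: ray_ball => //.
  have -> : ts - (ts + e / Kn u / 2) = - (e / Kn u / 2) by ring.
  rewrite normrN gtr0_norm; lra.
move/tsub; lra.
Qed.


Lemma sq_pos (u : R * R) : u <> (0, 0) -> 0 < u.1^+2 + u.2^+2.
Proof.
move=> Hu.
case: (eqVneq u.1 0) => h1; case: (eqVneq u.2 0) => h2.
- by case: Hu; rewrite [u]surjective_pairing h1 h2.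
- have : 0 < u.2^+2 by rewrite lt_def sqrf_eq0 h2 sqr_ge0.
  by have := sqr_ge0 u.1; lra.
- have : 0 < u.1^+2 by rewrite lt_def sqrf_eq0 h1 sqr_ge0.
  by have := sqr_ge0 u.2; lra.
- have : 0 < u.1^+2 by rewrite lt_def sqrf_eq0 h1 sqr_ge0.
  by have := sqr_ge0 u.2; lra.
Qed.

Lemma enorm_scale (c : R) (v : R * R) : enorm (pscale c v) = `|c| * enorm v.
Proof.
rewrite /enorm /pscale /=.
have -> : (c * v.1)^+2 + (c * v.2)^+2 = c^+2 * (v.1^+2 + v.2^+2) by ring.
by rewrite sqrtrM ?sqr_ge0 // sqrtr_sqr.
Qed.

Lemma enorm_gt0 (v : R * R) : v <> (0, 0) -> 0 < enorm v.
Proof. by move=> /sq_pos h; rewrite /enorm sqrtr_gt0. Qed.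

Lemma unit_sq (v : R * R) : unit_circle v -> v.1^+2 + v.2^+2 = 1.
Proof.
rewrite /unit_circle /enorm /= => h.
have h0 : 0 <= v.1^+2 + v.2^+2 by have := sqr_ge0 v.1; have := sqr_ge0 v.2; lra.
by rewrite -(sqr_sqrtr h0) h expr1n.
Qed.

Lemma unit_ne0 (v : R * R) : unit_circle v -> v <> (0, 0).
Proof.
move=> /unit_sq h E; rewrite E /= in h.
by move: h; rewrite expr0n /= addr0 => /eqP; rewrite eq_sym oner_eq0.
Qed.

Lemma psub_rp v t : psub (rp v t) o = pscale t v.
Proof. by rewrite /rp /psub /padd /pscale /=; congr pair; ring. Qed.

Lemma radial_rp v t : 0 < t -> unit_circle v -> radial o (rp v t) = v.
Proof.
move=> t0 hv; rewrite /radial psub_rp enorm_scale hv mulr1 gtr0_norm //.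
rewrite /pscale /=; rewrite !mulrA mulVf ?gt_eqF // !mul1r.
by case: v {hv}.
Qed.

Lemma rp_radial p : p <> o -> p = rp (radial o p) (enorm (psub p o)).
Proof.
move=> hp.
have n0 : 0 < enorm (psub p o).
  apply: enorm_gt0 => E; apply: hp.
  move: E; rewrite /psub; case: p => p1 p2 /= [e1 e2].
  rewrite (surjective_pairing o); congr pair; lra.
rewrite /rp /radial /padd /pscale /psub /= !mulrA mulfV ?gt_eqF // !mul1r.
by rewrite [LHS]surjective_pairing; congr pair; ring.
Qed.

Lemma Bo : ~ boundary M o.
Proof.
move=> /Bchar [H _]; have [s0 Ss0] := HS0; have := H s0 Ss0.
have [/absB [h1 h2] /absB [h3 h4]] := Hsq Ss0; rewrite /N.
have e1 : (o.1 - s0.1)^+2 <= 1/400.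
  have -> : (o.1 - s0.1)^+2 = (s0.1 - o.1) * (s0.1 - o.1) by ring.
  nra.
have e2 : (o.2 - s0.2)^+2 <= 1/400.
  have -> : (o.2 - s0.2)^+2 = (s0.2 - o.2) * (s0.2 - o.2) by ring.
  nra.
lra.
Qed.

Definition gfun (v : R * R) := xget o (ray o v `&` boundary M).

Lemma g_spec v : unit_circle v -> exists2 t, 0 <= t & gfun v = rp v t /\ boundary M (gfun v).
Proof.
move=> hv; have [t t0 Bt] := ray_exists (unit_ne0 hv).
have : (ray o v `&` boundary M) (gfun v).
  by apply: xgetPex; exists (rp v t); split => //; exists t.
by move=> [[t' t'0 E] Bg]; exists t'.
Qed.

Lemma Nrp v t s : N (rp v t) s = Fq t v.1 v.2 (s.1 - o.1) (s.2 - o.2).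
Proof. by rewrite /rp Nray. Qed.

Lemma tbounds v t : unit_circle v -> 0 <= t -> boundary M (rp v t) -> 4/5 <= t /\ t <= 6/5.
Proof.
move=> hv t0 /Bchar [H1 [s [Ss Hs]]]; have [s0 Ss0] := HS0.
have hv' := unit_sq hv.
have [a1 a2] := Hsq Ss0; have [b1 b2] := Hsq Ss.
split.
  by apply: (ar_tlow hv' a1 a2 t0); rewrite -Nrp; exact: H1.
by apply: (ar_thigh hv' b1 b2 t0); rewrite -Nrp.
Qed.

Lemma g_cont : {within @unit_circle R, continuous gfun}.
Proof.
apply: ed_within => v0 hv0 e e0.
have [t0 t00 [E0 B0]] := g_spec hv0.
rewrite E0 in B0.
have [t0l t0h] := tbounds hv0 t00 B0.
pose eta := Num.min (e / 4) (1/10).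
have eta0 : 0 < eta by rewrite lt_min; apply/andP; split; lra.
have eta1 : eta <= e / 4 by rewrite /eta ge_min lexx.
have eta2 : eta <= 1/10 by rewrite /eta ge_min lexx orbT.
exists (eta / 20); first lra.
move=> v hv /ball2E [d1 d2].
rewrite distrC in d1; rewrite distrC in d2.
have [t t0' [E B1]] := g_spec hv; rewrite E in B1.
have [tl th] := tbounds hv t0' B1.
have hv0' := unit_sq hv0; have hv' := unit_sq hv.
have tlt : t < t0 + eta.
  rewrite ltNge; apply/negP => ht.
  move/Bchar: (B1) => [_ [s [Ss Hs]]]; rewrite Nrp in Hs.
  move/Bchar: (B0) => [H0 _]; have := H0 s Ss; rewrite Nrp => H0s.
  have [w1 w2] := Hsq Ss.
  have U := ar_up hv0' w1 w2 t0l eta0 H0s.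
  have T0 : 0 <= t0 + eta by lra.
  have T1 : t0 + eta <= 13/10 by lra.
  have T2 : 7/10 <= t0 + eta by lra.
  have [P _] := ar_perturb hv0' hv' w1 w2 T0 T1 d1 d2.
  have Mo := ar_mono2 hv' w1 w2 T2 ht.
  lra.
have tgt : t0 - eta < t.
  rewrite ltNge; apply/negP => ht.
  move/Bchar: (B0) => [_ [s [Ss Hs]]]; rewrite Nrp in Hs.
  move/Bchar: (B1) => [H1 _]; have := H1 s Ss; rewrite Nrp => H1s.
  have [w1 w2] := Hsq Ss.
  have U := ar_down hv0' w1 w2 t0l eta0 eta2 Hs.
  have T0 : 0 <= t0 - eta by lra.
  have T1 : t0 - eta <= 13/10 by lra.
  have T2 : 7/10 <= t by lra.
  have [_ P] := ar_perturb hv0' hv' w1 w2 T0 T1 d1 d2.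
  have Mo := ar_mono2 hv' w1 w2 T2 ht.
  lra.
have tt : `|t0 - t| < eta by rewrite ltr_norml; apply/andP; split; lra.
rewrite E0 E; apply/ball2E; rewrite /rp /padd /pscale /=.
have [/andP [u1 u2] /andP [u3 u4]] := ar_unit hv'.
split.
  apply: (@ar_final _ o.1 t0 t v0.1 v.1 eta (eta/20) e tt) => //; first by rewrite distrC.
  by apply/andP; split; lra.
  by apply/andP; split; lra.
apply: (@ar_final _ o.2 t0 t v0.2 v.2 eta (eta/20) e tt) => //; first by rewrite distrC.
  by apply/andP; split; lra.
  by apply/andP; split; lra.
Qed.


Lemma radial_cont : {within boundary M, continuous (radial o)}.
Proof.
apply: continuous_in_subspaceT => p; rewrite inE => Bp.
have hp : p <> o by move=> E; apply: Bo; rewrite -E.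
pose nf := fun q : R * R => enorm (psub q o).
have n0 : nf p != 0.
  rewrite gt_eqF // /nf; apply: enorm_gt0 => E; apply: hp.
  move: E; rewrite /psub; case: p {Bp} => p1 p2 /= [e1 e2].
  rewrite (surjective_pairing o); congr pair; lra.
have cn : {for p, continuous nf}.
  rewrite /nf /enorm /psub /=.
  apply: (continuous_comp (f := fun q : R * R => (q.1 - o.1)^+2 + (q.2 - o.2)^+2) (g := @Num.sqrt R)).
    have H := continuousD (sqd_cont _ _ o.1 (fst_cont p)) (sqd_cont _ _ o.2 (snd_cont p)).
    move=> A; move: A; exact: H.
  exact: sqrt_continuous.
have ci : {for p, continuous (fun q => (nf q)^-1)} by exact: continuousV.
have c1 : {for p, continuous (fun q : R * R => q.1 - o.1)}.
  by apply: continuousB; [exact: fst_cont | exact: cvg_cst].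
have c2 : {for p, continuous (fun q : R * R => q.2 - o.2)}.
  by apply: continuousB; [exact: snd_cont | exact: cvg_cst].
have -> : radial o = fun q => ((nf q)^-1 * (q.1 - o.1), (nf q)^-1 * (q.2 - o.2)) by [].
exact: cont_pair (continuousM ci c1) (continuousM ci c2).
Qed.

Lemma radial_unit p : boundary M p -> unit_circle (radial o p).
Proof.
move=> Bp; have hp : p <> o by move=> E; apply: Bo; rewrite -E.
have n0 : 0 < enorm (psub p o).
  apply: enorm_gt0 => E; apply: hp.
  move: E; rewrite /psub; case: p {Bp} => p1 p2 /= [e1 e2].
  rewrite (surjective_pairing o); congr pair; lra.
rewrite /unit_circle /radial /= enorm_scale gtr0_norm ?invr_gt0 //.
by rewrite mulVf // gt_eqF.
Qed.

Lemma g_radial p : boundary M p -> gfun (radial o p) = p.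
Proof.
move=> Bp; have hp : p <> o by move=> E; apply: Bo; rewrite -E.
have hv := radial_unit Bp.
have [t t0 [E B1]] := g_spec hv.
rewrite E in B1 *.
have pE := rp_radial hp.
have n0 : 0 <= enorm (psub p o) by rewrite /enorm sqrtr_ge0.
rewrite [RHS]pE; apply: ray_uniq => //.
by rewrite -pE.
Qed.

Lemma radial_g v : unit_circle v -> radial o (gfun v) = v.
Proof.
move=> hv; have [t t0 [E B1]] := g_spec hv.
rewrite E in B1 *.
have : t != 0.
  apply/negP => /eqP t00; apply: Bo; move: B1; rewrite t00 /rp /padd /pscale /= !mul0r !addr0.
  by rewrite -surjective_pairing.
move=> tn; apply: radial_rp => //; rewrite lt_def tn t0.
done.
Qed.

End Main.

Unset Implicit Arguments. Set Strict Implicit.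

Theorem mainTheorem8 (R : realType) (eps : R) (o : R * R) (S : set (R * R)) :
  0 < eps -> eps <= 1 / 10 ->
  S `<=` square o eps -> S !=set0 -> circular_domain S ->
  let B := boundary (minkowski_sum S (@unit_disk R)) in
  (forall u : R * R, u <> (0, 0) ->
     exists p, (ray o u `&` B) p /\ (forall q, (ray o u `&` B) q -> q = p)) /\
  (~ B o /\
   {within B, continuous (radial o)} /\
   (forall p, B p -> unit_circle (radial o p)) /\
   exists g : R * R -> R * R,
     {within @unit_circle R, continuous g} /\
     (forall v, unit_circle v -> B (g v)) /\
     (forall p, B p -> g (radial o p) = p) /\
     (forall v, unit_circle v -> radial o (g v) = v)).
Proof.
move=> e0 e1 Ssq HS0 [Scl _] B.
have Hsq : forall s, S s -> `|s.1 - o.1| <= 1/20 /\ `|s.2 - o.2| <= 1/20.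
  move=> s /Ssq [h1 h2]; split; lra.
have Hcpt : compact S.
  have cX := compact_setX ((@segment_compact R (o.1 - eps/2) (o.1 + eps/2)))
     ((@segment_compact R (o.2 - eps/2) (o.2 + eps/2))).
  apply: (subclosed_compact Scl cX).
  move=> s /Ssq [/absB [h1 h2] /absB [h3 h4]]; split => /=; rewrite in_itv /=;
    apply/andP; split; lra.
split.
  move=> u hu; have [t t0 Bt] := ray_exists Hsq HS0 Hcpt hu.
  exists (rp o u t); split; first by split => //; exists t.
  move=> q [[t' t'0 ->] Bq].
  exact: (ray_uniq Hsq HS0 Hcpt t'0 t0 Bq Bt).
split; first exact: (Bo Hsq HS0 Hcpt).
split; first exact: (radial_cont Hsq HS0 Hcpt).
split; first exact: (radial_unit Hsq HS0 Hcpt).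
exists (gfun o S); split; first exact: (g_cont Hsq HS0 Hcpt).
split.
  by move=> v hv; have [t _ [_ H]] := g_spec Hsq HS0 Hcpt hv.
split; first exact: (g_radial Hsq HS0 Hcpt).
exact: (radial_g Hsq HS0 Hcpt).
Qed.
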